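(* Let $m,n\geq 2$, let $P_m+P_n$ be the join of the paths $P_m$ and $P_n$, and let $g:V(G_1)\to V(G_2)$ be any function between two disjoint copies $G_1,G_2$ of $P_m+P_n$ whose image has size $s$ with $1<s<m+n$. Then $1\leq Dist(F_{P_m+P_n})\leq 3$.
   Context: $P_k$ denotes the path on $k$ vertices. The join $G+G^*$ of graphs with disjoint vertex sets has vertex set $V(G)\cup V(G^* )$ and edge set $E(G)\cup E(G^* )\cup\{uv: u\in V(G), v\in V(G^* )\}$. $Dist(H)$ is the least $t$ such that $H$ has a labeling $V(H)\to\{1,\dots,t\}$ preserved by no non-identity automorphism of $H$. Functigraph: for disjoint copies $G_1,G_2$ of $G$ and a function $g:V(G_1)\to V(G_2)$, $F_G$ has vertex set $V(G_1)\cup V(G_2)$ and edge set $E(G_1)\cup E(G_2)\cup\{uv: u\in V(G_1),\ g(u)=v\}$. *)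

(* Defs.v *)
From mathcomp Require Import all_boot all_order all_fingroup.
Set Implicit Arguments. Unset Strict Implicit. Unset Printing Implicit Defensive.

Definition path_graph (k : nat) : rel 'I_k :=
  fun i j => (i.+1 == j :> nat) || (j.+1 == i :> nat).

Arguments path_graph k : clear implicits.

Definition graph_join (A B : finType) (eA : rel A) (eB : rel B) : rel (A + B) :=
  fun x y => match x, y with
             | inl a, inl a' => eA a a'
             | inr b, inr b' => eB b b'
             | _, _ => true
             end.

Definition functigraph (V : finType) (e : rel V) (g : V -> V) : rel (V + V) :=
  fun x y => match x, y with
             | inl u, inl u' => e u u'
             | inr v, inr v' => e v v'
             | inl u, inr v => g u == v
             | inr v, inl u => g u == v
             end.

Definition is_automorphism (T : finType) (e : rel T) (s : {perm T}) : bool :=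
  [forall x, forall y, e (s x) (s y) == e x y].

Definition distinguishing_labeling (T : finType) (e : rel T) (t : nat)
  (f : T -> 'I_t) : bool :=
  [forall s : {perm T}, (is_automorphism e s && [forall x, f (s x) == f x])
                          ==> (s == 1%g)].

Definition has_dist_labeling (T : finType) (e : rel T) (t : nat) : bool :=
  [exists f : {ffun T -> 'I_t}, distinguishing_labeling e f].

Lemma has_dist_labeling_card (T : finType) (e : rel T) :
  has_dist_labeling e #|T|.
Proof.
apply/existsP; exists [ffun x => enum_rank x].
apply/forallP => s; apply/implyP => /andP [_ /forallP H].
apply/eqP/permP => x; rewrite perm1.
by have := H x; rewrite !ffunE => /eqP /enum_rank_inj.
Qed.

Lemma has_dist_labeling_ex (T : finType) (e : rel T) :
  exists t, has_dist_labeling e t.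
Proof. by exists #|T|; apply: has_dist_labeling_card. Qed.

Definition Dist (T : finType) (e : rel T) : nat :=
  ex_minn (has_dist_labeling_ex e).

(* Main.v *)
Require Import Defs.
From mathcomp Require Import all_boot all_order all_fingroup.
From mathcomp Require Import zify.
Set Implicit Arguments. Unset Strict Implicit. Unset Printing Implicit Defensive.

Definition isL (A B : Type) (x : A + B) : bool := if x is inl _ then true else false.

Lemma path_nbr k (hk : 1 < k) (i : 'I_k) : exists i' : 'I_k, path_graph k i i'.
Proof.
case: (ltnP i.+1 k) => H.
  by exists (Ordinal H); rewrite /path_graph /= eqxx.
have Hi : i.-1 < k by apply: leq_ltn_trans (leq_pred _) (ltn_ord i).
exists (Ordinal Hi); rewrite /path_graph /=.
have : i = k.-1 :> nat by have := ltn_ord i; lia.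
move=> ->; apply/orP; right; apply/eqP; lia.
Qed.

Lemma path_irr k (i : 'I_k) : path_graph k i i = false.
Proof. by rewrite /path_graph; apply/negP; case/orP => /eqP; lia. Qed.

Lemma two_elts k (hk : 1 < k) : exists i j : 'I_k, i != j.
Proof.
have h0 : 0 < k by lia.
by exists (Ordinal h0), (Ordinal hk).
Qed.

Lemma core m n (hm : 1 < m) (hn : 1 < n) (P : pred ('I_m + 'I_n)) :
  (exists a, P a) ->
  (forall x y1 y2, P x -> ~~ P y1 -> ~~ P y2 ->
     graph_join (path_graph m) (path_graph n) x y1 ->
     graph_join (path_graph m) (path_graph n) x y2 -> y1 = y2) ->
  forall z1 z2, ~~ P z1 -> ~~ P z2 -> z1 = z2.
Proof.
move=> [a Pa] loc.
have X : forall i1 i2 : 'I_m, i1 != i2 -> ~~ P (inl i1) -> ~~ P (inl i2) -> False.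
  move=> i1 i2 ne N1 N2.
  have NB : forall j, ~~ P (inr j).
    move=> j; apply/negP => Pj.
    by move: (loc _ _ _ Pj N1 N2 isT isT) => [] /eqP; rewrite (negbTE ne).
  case: a Pa => [l|j] Pa; last by move: (NB j); rewrite Pa.
  have [b0 [b1 nb]] := two_elts hn.
  by move: (loc _ _ _ Pa (NB b0) (NB b1) isT isT) => [] /eqP; rewrite (negbTE nb).
have Y : forall i1 i2 : 'I_n, i1 != i2 -> ~~ P (inr i1) -> ~~ P (inr i2) -> False.
  move=> i1 i2 ne N1 N2.
  have NB : forall j, ~~ P (inl j).
    move=> j; apply/negP => Pj.
    by move: (loc _ _ _ Pj N1 N2 isT isT) => [] /eqP; rewrite (negbTE ne).
  case: a Pa => [j|l] Pa; first by move: (NB j); rewrite Pa.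
  have [b0 [b1 nb]] := two_elts hm.
  by move: (loc _ _ _ Pa (NB b0) (NB b1) isT isT) => [] /eqP; rewrite (negbTE nb).
have mixed : forall (i : 'I_m) (j : 'I_n), ~~ P (inl i) -> ~~ P (inr j) -> False.
  move=> i j Ni Nj.
  have [i' Hi'] := path_nbr hm i.
  case: (boolP (P (inl i'))) => Pi'.
    have : inl i = inr j :> ('I_m + 'I_n) by apply: (loc _ _ _ Pi' Ni Nj) => //=; rewrite /path_graph orbC.
    by [].
  apply: (X i i') => //; apply/negP => /eqP E; by rewrite E path_irr in Hi'.
move=> [i1|j1] [i2|j2] N1 N2.
- case: (eqVneq i1 i2) => [->//|ne]; by case: (X _ _ ne N1 N2).
- by case: (mixed _ _ N1 N2).
- by case: (mixed _ _ N2 N1).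
- case: (eqVneq j1 j2) => [->//|ne]; by case: (Y _ _ ne N1 N2).
Qed.

Notation eG m n := (graph_join (path_graph m) (path_graph n)).

Lemma card_split (A B : finType) (Q : pred (A + B)) :
  #|Q| = #|[pred u | Q (inl u)]| + #|[pred u | Q (inr u)]|.
Proof. by rewrite -!sum1_card big_sumType. Qed.

Lemma local_emb m n (g : 'I_m + 'I_n -> 'I_m + 'I_n)
  (j : 'I_m + 'I_n -> ('I_m + 'I_n) + ('I_m + 'I_n)) :
  injective j -> (forall x y, functigraph (eG m n) g (j x) (j y) = eG m n x y) ->
  forall x y1 y2, isL (j x) -> ~~ isL (j y1) -> ~~ isL (j y2) ->
     eG m n x y1 -> eG m n x y2 -> y1 = y2.
Proof.
move=> ij Hj x y1 y2 Px N1 N2 E1 E2; apply: ij.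
rewrite -Hj in E1; rewrite -Hj in E2.
move: Px N1 N2 E1 E2; case: (j x) => // a _.
case: (j y1) => // b1 _; case: (j y2) => // b2 _ /= /eqP <- /eqP <-. done.
Qed.

Lemma pres m n (hm : 1 < m) (hn : 1 < n) (g : 'I_m + 'I_n -> 'I_m + 'I_n)
  (hs2 : #|[set g x | x : 'I_m + 'I_n]| < m + n)
  (s : {perm ('I_m + 'I_n) + ('I_m + 'I_n)})
  (Hs : forall x y, functigraph (eG m n) g (s x) (s y) = functigraph (eG m n) g x y) :
  (forall u, isL (s (inl u))) /\ (forall u, ~~ isL (s (inr u))).
Proof.
have cT : #|{: 'I_m + 'I_n}| = m + n by rewrite card_sum !card_ord.
set P1 : pred ('I_m + 'I_n) := fun u => isL (s (inl u)).
set P2 : pred ('I_m + 'I_n) := fun u => isL (s (inr u)).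
have Hc : #|P1| + #|P2| = m + n.
  have E : #|[pred x | isL (s x)]| = #|[pred x : ('I_m + 'I_n) + ('I_m + 'I_n) | isL x]|.
    have -> : #|[pred x | isL (s x)]| = #|s @^-1: [set x : ('I_m + 'I_n) + ('I_m + 'I_n) | isL x]|.
      by apply: eq_card => x; rewrite !inE.
    by rewrite card_preimset //; [apply: eq_card => x; rewrite !inE | apply: perm_inj].
  rewrite card_split in E; rewrite (card_split [pred x : ('I_m + 'I_n) + ('I_m + 'I_n) | isL x]) in E.
  rewrite (eq_card0 (A := [pred u | [pred x : ('I_m + 'I_n) + ('I_m + 'I_n) | isL x] (inr u)])) // addn0 in E.
  by rewrite -cT -E.
have loc1 := local_emb (j := fun u => s (inl u)) (fun x y E => inl_inj (perm_inj E))
   (fun x y => Hs (inl x) (inl y)).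
have loc2 := local_emb (j := fun u => s (inr u)) (fun x y E => inr_inj (perm_inj E))
   (fun x y => Hs (inr x) (inr y)).
have C1 : #|P1| + #|[predC P1]| = m + n by rewrite cardC.
have C2 : #|P2| + #|[predC P2]| = m + n by rewrite cardC.
have le1 : forall P : pred ('I_m + 'I_n), (exists a, P a) ->
    (forall x y1 y2, P x -> ~~ P y1 -> ~~ P y2 -> eG m n x y1 -> eG m n x y2 -> y1 = y2) ->
    #|[predC P]| <= 1.
  move=> P ex lc; apply/card_le1_eqP => z1 z2; rewrite !inE => N1 N2.
  exact: (core hm hn ex lc).
have allP1 : forall u, P1 u.
  move=> u0; apply/negPn/negP => N0.
  case: (boolP [exists a, P1 a]) => [/existsP ex1 | /existsPn nex1].
    have h1 := le1 P1 ex1 loc1.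
    have pc : 0 < #|[predC P1]| by apply/card_gt0P; exists u0.
    have : 0 < #|P2| by lia.
    move/card_gt0P => [a Pa].
    have h2 := le1 P2 (ex_intro _ a Pa) loc2.
    lia.
  have c10 : #|P1| = 0 by apply: eq_card0 => x; apply/negbTE/nex1.
  have c2 : #|[predC P2]| = 0 by lia.
  have allP2 : forall u, P2 u.
    by move=> u; apply/negPn; move: (card0_eq c2 u); rewrite !inE => ->.
  have surj : forall b, b \in [set g x | x : 'I_m + 'I_n].
    move=> b; set x := (s^-1)%g (inr b).
    have sx : s x = inr b by rewrite /x permKV.
    case Ex : x sx => [a|u] sx; last by move: (allP2 u); rewrite /P2 sx.
    have E : functigraph (eG m n) g (s (inl a)) (s (inr (g a))) by rewrite Hs /= eqxx.
    move: E (allP2 (g a)); rewrite sx /P2; case: (s (inr (g a))) => // c /= /eqP <- _.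
    by apply/imsetP; exists c.
  have : [set g x | x : 'I_m + 'I_n] = [set: 'I_m + 'I_n] by apply/setP => b; rewrite surj inE.
  by move=> EE; move: hs2; rewrite EE cardsT cT ltnn.
split => // u; apply/negP => Pu.
have c1 : #|P1| = m + n by rewrite -cT; apply/eqP; rewrite eqn_leq max_card /=; apply/subset_leq_card/subsetP => x _; exact: allP1.
have : 0 < #|P2| by apply/card_gt0P; exists u.
lia.
Qed.

Lemma path_fix k (h : 'I_k -> 'I_k) : injective h ->
  (forall x y, path_graph k (h x) (h y) = path_graph k x y) ->
  (forall i : 'I_k, val i = 0 -> h i = i) -> forall i, h i = i.
Proof.
move=> ij hp h0.
suff S : forall t (i : 'I_k), nat_of_ord i <= t -> h i = i by move=> i; exact: (S i).
elim=> [|t IH] i hi; first by apply: h0; apply/eqP; rewrite -leqn0.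
case: (leqP i t) => hit; first exact: IH.
have ei : nat_of_ord i = t.+1 by lia.
have tk : t < k by have := ltn_ord i; lia.
have hip := IH (Ordinal tk) (leqnn _).
have E : path_graph k (Ordinal tk) i by rewrite /path_graph /= ei eqxx.
rewrite -hp hip /path_graph /= in E.
case/orP: E => /eqP E; first by apply: val_inj; rewrite /= -E ei.
have t1k : t.-1 < k by lia.
have hiq := IH (Ordinal t1k) (leq_pred _).
have : h i = h (Ordinal t1k) by apply: val_inj; rewrite hiq /=; lia.
move/ij/(congr1 val) => /=; lia.
Qed.

Definition lab0 : 'I_3 := @Ordinal 3 0 isT.
Definition lab1 : 'I_3 := @Ordinal 3 1 isT.
Definition lab2 : 'I_3 := @Ordinal 3 2 isT.

Definition Lm m n (x : 'I_m + 'I_n) : 'I_3 :=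
  match x with
  | inl i => if val i == 0 then lab0 else lab1
  | inr j => if val j == 0 then lab2 else lab0
  end.

Lemma rigid m n (hm : 2 < m) (hn : 1 < n) (h : 'I_m + 'I_n -> 'I_m + 'I_n) :
  injective h -> (forall x y, eG m n (h x) (h y) = eG m n x y) ->
  (forall x, Lm (h x) = Lm x) -> forall x, h x = x.
Proof.
move=> ij he hl.
have hB0 : forall j : 'I_n, val j = 0 -> h (inr j) = inr j.
  move=> j j0; have := hl (inr j); rewrite /= j0 /=.
  case: (h (inr j)) => [i|j'] /=; first by case: ifP => _ /(congr1 val).
  case: ifP => [/eqP e _|_ /(congr1 val)//]; congr inr; apply: val_inj; by rewrite /= e j0.
have a2m : 2 < m by [].
have hA0 : forall i : 'I_m, val i = 0 -> h (inl i) = inl i.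
  move=> i i0.
  have E : eG m n (h (inl i)) (h (inl (Ordinal a2m))) = false.
    by rewrite he /= /path_graph /= i0.
  have := hl (inl (Ordinal a2m)); rewrite /=.
  move: E; case: (h (inl (Ordinal a2m))) => [k|j] /=; last first.
    by move=> _; case: ifP => _ /(congr1 val).
  move=> E _; have := hl (inl i); rewrite /= i0 /=.
  move: E; case: (h (inl i)) => [i'|j'] //= _.
  case: ifP => [/eqP e _|_ /(congr1 val)//]; congr inl; apply: val_inj; by rewrite /= e i0.
have sideA : forall i, isL (h (inl i)).
  move=> i; case: (eqVneq (val i) 0) => [/hA0 -> //|ne].
  have := hl (inl i); rewrite /= (negbTE ne).
  by case: (h (inl i)) => //= j; case: ifP => _ /(congr1 val).
have sideB : forall j, ~~ isL (h (inr j)).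
  move=> j; case: (eqVneq (val j) 0) => [/hB0 -> //|ne].
  have := hl (inr j); rewrite /= (negbTE ne).
  case E: (h (inr j)) => [i|//] /=; case: ifP => [/eqP i0 _|_ /(congr1 val)//].
  by move: E; rewrite -(hA0 _ i0) => /ij.
pose hA (i : 'I_m) := if h (inl i) is inl a then a else i.
pose hB (j : 'I_n) := if h (inr j) is inr b then b else j.
have EA : forall i, h (inl i) = inl (hA i).
  by move=> i; move: (sideA i); rewrite /hA; case: (h (inl i)).
have EB : forall j, h (inr j) = inr (hB j).
  by move=> j; move: (sideB j); rewrite /hB; case: (h (inr j)).
have FA : forall i, hA i = i.
  apply: path_fix.
  - by move=> x y E; apply: inl_inj; apply: ij; rewrite !EA E.
  - by move=> x y; have := he (inl x) (inl y); rewrite !EA.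
  - by move=> i i0; have := EA i; rewrite hA0 // => -[<-].
have FB : forall j, hB j = j.
  apply: path_fix.
  - by move=> x y E; apply: inr_inj; apply: ij; rewrite !EB E.
  - by move=> x y; have := he (inr x) (inr y); rewrite !EB.
  - by move=> i i0; have := EB i; rewrite hB0 // => -[<-].
by case=> [i|j]; rewrite ?EA ?EB ?FA ?FB.
Qed.

Lemma four : forall a b c x y : 'I_2 + 'I_2, a != b -> a != c -> b != c ->
  x != a -> x != b -> x != c -> y != a -> y != b -> y != c -> x = y.
Proof.
move=> a b c x y ab ac bc xa xb xc ya yb yc.
have C : #|(x |: (a |: (b |: [set c])))| = 4.
  rewrite !cardsU1 cards1 !inE; rewrite (negbTE xa) (negbTE xb) (negbTE xc) (negbTE ab) (negbTE ac) (negbTE bc) //.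
have : (x |: (a |: (b |: [set c]))) = [set: 'I_2 + 'I_2].
  apply/eqP; rewrite eqEcard subsetT cardsT C card_sum !card_ord //.
move/setP/(_ y); rewrite !inE (negbTE ya) (negbTE yb) (negbTE yc) orbF .
by rewrite orbF => /eqP.
Qed.

Definition sw (A B : Type) (x : A + B) : B + A :=
  match x with inl a => inr a | inr b => inl b end.

Lemma swK (A B : Type) (x : A + B) : sw (sw x) = x.
Proof. by case: x. Qed.

Lemma swE m n (a b : 'I_m + 'I_n) : eG n m (sw a) (sw b) = eG m n a b.
Proof. by case: a; case: b. Qed.

Lemma rigid' m n (hm : 1 < m) (hn : 2 < n) (h : 'I_m + 'I_n -> 'I_m + 'I_n) :
  injective h -> (forall x y, eG m n (h x) (h y) = eG m n x y) ->
  (forall x, Lm (sw (h x)) = Lm (sw x)) -> forall x, h x = x.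
Proof.
move=> ij he hl.
have R := @rigid n m hn hm (fun y => sw (h (sw y))).
have H : forall y, sw (h (sw y)) = y.
  apply: R.
  - by move=> x y /(congr1 (@sw _ _)); rewrite !swK => /ij /(congr1 (@sw _ _)); rewrite !swK.
  - by move=> x y; rewrite swE he; case: x; case: y.
  - by move=> y; rewrite hl swK.
by move=> x; have := H (sw x); rewrite swK => /(congr1 (@sw _ _)); rewrite !swK.
Qed.

Lemma dist_of_rigid m n (hm : 1 < m) (hn : 1 < n) (g : 'I_m + 'I_n -> 'I_m + 'I_n)
  (hs2 : #|[set g x | x : 'I_m + 'I_n]| < m + n) (L : 'I_m + 'I_n -> 'I_3) :
  (forall h, injective h -> (forall x y, eG m n (h x) (h y) = eG m n x y) ->
     (forall x, L (h x) = L x) -> forall x, h x = x) ->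
  has_dist_labeling (functigraph (eG m n) g) 3.
Proof.
move=> RIG; apply/existsP.
exists [ffun z => match z with inl x => L x | inr x => L x end].
apply/forallP => s; apply/implyP => /andP [/forallP Ha /forallP Hl].
have Hs : forall x y, functigraph (eG m n) g (s x) (s y) = functigraph (eG m n) g x y.
  by move=> x y; apply/eqP; move/forallP: (Ha x); apply.
have [P1 P2] := pres hm hn hs2 Hs.
pose s1 u := if s (inl u) is inl a then a else u.
pose s2 u := if s (inr u) is inr a then a else u.
have E1 : forall u, s (inl u) = inl (s1 u) by move=> u; move: (P1 u); rewrite /s1; case: (s (inl u)).
have E2 : forall u, s (inr u) = inr (s2 u) by move=> u; move: (P2 u); rewrite /s2; case: (s (inr u)).
have F1 : forall x, s1 x = x.
  apply: RIG.
  - by move=> x y E; apply: inl_inj; apply: (@perm_inj _ s); rewrite !E1 E.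
  - by move=> x y; have := Hs (inl x) (inl y); rewrite !E1.
  - by move=> x; have := Hl (inl x); rewrite E1 !ffunE => /eqP.
have F2 : forall x, s2 x = x.
  apply: RIG.
  - by move=> x y E; apply: inr_inj; apply: (@perm_inj _ s); rewrite !E2 E.
  - by move=> x y; have := Hs (inr x) (inr y); rewrite !E2.
  - by move=> x; have := Hl (inr x); rewrite E2 !ffunE => /eqP.
by apply/eqP/permP => z; rewrite perm1; case: z => x; rewrite ?E1 ?E2 ?F1 ?F2.
Qed.

Definition K4lab (a b c : 'I_2 + 'I_2) (x : 'I_2 + 'I_2) : 'I_3 :=
  if (x == a) || (x == b) then lab0 else if x == c then lab1 else lab2.

Lemma k4fix (a b c : 'I_2 + 'I_2) (h : 'I_2 + 'I_2 -> 'I_2 + 'I_2) :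
  a != b -> c != a -> c != b -> injective h ->
  (forall x, K4lab a b c (h x) = K4lab a b c x) -> h a = a -> forall x, h x = x.
Proof.
move=> ab ca cb ij hl ha.
have L0 : forall y, K4lab a b c y = lab0 -> (y == a) || (y == b).
  by move=> y; rewrite /K4lab; case: ifP => // _; case: ifP => _ /(congr1 val).
have L1 : forall y, K4lab a b c y = lab1 -> y = c.
  by move=> y; rewrite /K4lab; case: ifP => [_ /(congr1 val)//|_]; case: ifP => [/eqP//|_ /(congr1 val)].
have L2 : forall y, K4lab a b c y = lab2 -> [/\ y != a, y != b & y != c].
  move=> y; rewrite /K4lab; case: ifP => [_ /(congr1 val)//|/negbT]; rewrite negb_or => /andP [ya yb].
  by case: ifP => [_ /(congr1 val)//|/negbT yc _]; split.
move=> x.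
case: (eqVneq x a) => [->//|xa].
case: (eqVneq x b) => [->|xb].
  have := hl b; rewrite /K4lab eqxx orbT => /L0 /orP [/eqP E|/eqP //].
  have eba : b = a by apply: ij; rewrite E ha.
  by rewrite eba eqxx in ab.
case: (eqVneq x c) => [->|xc].
  by apply: L1; rewrite hl /K4lab (negbTE ca) (negbTE cb) eqxx.
have : K4lab a b c (h x) = lab2 by rewrite hl /K4lab (negbTE xa) (negbTE xb) (negbTE xc).
move/L2 => [ha' hb' hc'].
have ac : a != c by rewrite eq_sym.
have bc : b != c by rewrite eq_sym.
exact: (four ab ac bc ha' hb' hc' xa xb xc).
Qed.

Lemma avoid2 (p q : 'I_2 + 'I_2) : exists r, (r != p) && (r != q).
Proof.
have : 0 < #|~: [set p; q]|.
  have := cardsC [set p; q]; rewrite cards2 card_sum !card_ord; case: (p != q) => /=; lia.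
case/card_gt0P => r; rewrite !inE negb_or => H; by exists r.
Qed.

Lemma k4 (g : 'I_2 + 'I_2 -> 'I_2 + 'I_2)
  (hs1 : 1 < #|[set g x | x : 'I_2 + 'I_2]|)
  (hs2 : #|[set g x | x : 'I_2 + 'I_2]| < 2 + 2) :
  has_dist_labeling (functigraph (eG 2 2) g) 3.
Proof.
have [q Hq] : exists q, q \notin [set g x | x : 'I_2 + 'I_2].
  case: (pickP (fun q => q \notin [set g x | x : 'I_2 + 'I_2])) => [q Hq|none]; first by exists q.
  have : [set g x | x : 'I_2 + 'I_2] = [set: 'I_2 + 'I_2].
    by apply/setP => b; rewrite inE; move: (none b) => /= /negbFE.
  by move=> E; move: hs2; rewrite E cardsT card_sum !card_ord.
pose u0 : 'I_2 + 'I_2 := inl ord0.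
pose p := g u0.
have pq : p != q by apply/eqP => E; move: Hq; rewrite -E; rewrite imset_f.
have [u [v guv]] : exists u v, g u != g v.
  case/card_gt1P: hs1 => x [y [/imsetP [u _ ->] /imsetP [v _ ->] ne]]; by exists u, v.
have uv : u != v by apply: contraNneq guv => ->.
have [r /andP [rp rq]] := avoid2 p q.
have [r' /andP [ru rv]] := avoid2 u v.
apply/existsP.
exists [ffun z => match z with inl x => K4lab u v r' x | inr x => K4lab p q r x end].
apply/forallP => s; apply/implyP => /andP [/forallP Ha /forallP Hl].
have Hs : forall x y, functigraph (eG 2 2) g (s x) (s y) = functigraph (eG 2 2) g x y.
  by move=> x y; apply/eqP; move/forallP: (Ha x); apply.
have [P1 P2] := pres (isT : 1 < 2) (isT : 1 < 2) hs2 Hs.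
pose s1 u := if s (inl u) is inl a then a else u.
pose s2 u := if s (inr u) is inr a then a else u.
have E1 : forall u, s (inl u) = inl (s1 u) by move=> w; move: (P1 w); rewrite /s1; case: (s (inl w)).
have E2 : forall u, s (inr u) = inr (s2 u) by move=> w; move: (P2 w); rewrite /s2; case: (s (inr w)).
have i1 : injective s1 by move=> x y E; apply: inl_inj; apply: (@perm_inj _ s); rewrite !E1 E.
have i2 : injective s2 by move=> x y E; apply: inr_inj; apply: (@perm_inj _ s); rewrite !E2 E.
have l1 : forall x, K4lab u v r' (s1 x) = K4lab u v r' x.
  by move=> x; have := Hl (inl x); rewrite E1 !ffunE => /eqP.
have l2 : forall x, K4lab p q r (s2 x) = K4lab p q r x.
  by move=> x; have := Hl (inr x); rewrite E2 !ffunE => /eqP.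
have Rg : forall x, g (s1 x) = s2 (g x).
  by move=> x; have := Hs (inl x) (inr (g x)); rewrite E1 E2 /= eqxx => /eqP.
have L0 : forall a b c y, K4lab a b c y = lab0 -> (y == a) || (y == b).
  by move=> a b c y; rewrite /K4lab; case: ifP => // _; case: ifP => _ /(congr1 val).
have F2 : forall x, s2 x = x.
  apply: (k4fix pq rp rq i2 l2).
  have := l2 p; rewrite {2}/K4lab eqxx /= => /L0 /orP [/eqP //|/eqP E].
  by move: Hq; rewrite -E /p -Rg imset_f.
have F1 : forall x, s1 x = x.
  apply: (k4fix uv ru rv i1 l1).
  have := l1 u; rewrite {2}/K4lab eqxx /= => /L0 /orP [/eqP //|/eqP E].
  by move: guv; rewrite -E Rg F2 eqxx.
by apply/eqP/permP => z; rewrite perm1; case: z => x; rewrite ?E1 ?E2 ?F1 ?F2.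
Qed.
Unset Implicit Arguments.

Theorem proposition3p6 (m n : nat) (hm : 2 <= m) (hn : 2 <= n)
  (g : 'I_m + 'I_n -> 'I_m + 'I_n)
  (hs1 : 1 < #|[set g x | x : 'I_m + 'I_n]|)
  (hs2 : #|[set g x | x : 'I_m + 'I_n]| < m + n) :
  1 <= Dist (functigraph (graph_join (path_graph m) (path_graph n)) g) <= 3.
Proof.
rewrite /Dist; case: ex_minnP => t Ht Hmin; apply/andP; split.
  case: t Ht {Hmin} => // /existsP [f _].
  have m0 : 0 < m by lia.
  by case: (f (inl (inl (Ordinal m0)))).
apply: Hmin.
case: (ltnP 2 m) => [m3|m2].
  apply: (dist_of_rigid hm hn hs2 (L := @Lm m n)).
  exact: rigid.
case: (ltnP 2 n) => [n3|n2].
  apply: (dist_of_rigid hm hn hs2 (L := fun x => Lm (sw x))).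
  exact: rigid'.
have em : m = 2 by lia.
have en : n = 2 by lia.
subst m n.
exact: k4.
Qed.
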